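(* Let $E=\{(x,y)\in\mathbb{R}^2: (x/a)^2+(y/b)^2<1\}$ with $0<b\le a$. Then \[ \frac12\left(\frac ab+\frac ba\right)\le P(E)\le\frac{1}{\sin\frac{b\pi}{2a}}\le\frac{2}{\pi}\left(\frac ab+\frac ba\right). \]
   Context: For four distinct points $a_1,a_2,a_3,a_4\in\mathbb{R}^2$ set $p(a_1,a_2,a_3,a_4)=\frac{|a_1-a_2||a_3-a_4|+|a_1-a_4||a_2-a_3|}{|a_1-a_3||a_2-a_4|}$. For a domain $D$ whose boundary is a Jordan curve, $P(D)=\sup p(a_1,a_2,a_3,a_4)$ over all distinct $a_1,a_2,a_3,a_4\in\partial D$ occurring in this order when $\partial D$ is traversed in the positive direction. *)

(* Defs.v *)
From Stdlib Require Import Reals Lra.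
Open Scope R_scope.

Definition pt := (R * R)%type.

Definition dist2 (u v : pt) : R :=
  sqrt ((fst u - fst v) ^ 2 + (snd u - snd v) ^ 2).

Definition pfun (a1 a2 a3 a4 : pt) : R :=
  (dist2 a1 a2 * dist2 a3 a4 + dist2 a1 a4 * dist2 a2 a3)
  / (dist2 a1 a3 * dist2 a2 a4).

Definition ellipse_dom (a b : R) (z : pt) : Prop :=
  (fst z / a) ^ 2 + (snd z / b) ^ 2 < 1.

Definition ell (a b t : R) : pt := (a * cos t, b * sin t).

(* Four distinct boundary points occurring in this order along the positively
   oriented boundary: a_i = ell t_i with t1 < t2 < t3 < t4 < t1 + 2 PI. *)
Definition ordered_quad (a b : R) (a1 a2 a3 a4 : pt) : Prop :=
  exists t1 t2 t3 t4 : R,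
    t1 < t2 /\ t2 < t3 /\ t3 < t4 /\ t4 < t1 + 2 * PI /\
    a1 = ell a b t1 /\ a2 = ell a b t2 /\ a3 = ell a b t3 /\ a4 = ell a b t4.

(* The set of values whose supremum is P(E). *)
Definition P_values (a b : R) (v : R) : Prop :=
  exists a1 a2 a3 a4 : pt, ordered_quad a b a1 a2 a3 a4 /\ v = pfun a1 a2 a3 a4.

(* Main.v *)
Require Import Defs.
From Stdlib Require Import Reals Lra Nsatz Psatz.
Open Scope R_scope.

Definition Nf (a b m : R) : R := sqrt (a^2 * sin m ^2 + b^2 * cos m ^2).

Lemma dist_ell_mh a b m h :
  dist2 (ell a b (m - h)) (ell a b (m + h)) = 2 * Rabs (sin h) * Nf a b m.
Proof.
  unfold dist2, ell, Nf; simpl fst; simpl snd.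
  rewrite cos_minus, cos_plus, sin_minus, sin_plus.
  transitivity (sqrt ((2 * sin h)^2) * sqrt (a^2 * sin m ^2 + b^2 * cos m ^2)).
  - rewrite <- sqrt_mult by nra. f_equal.
    pose proof (sin2_cos2 h) as E1. pose proof (sin2_cos2 m) as E2.
    ring.
  - rewrite <- Rsqr_pow2, sqrt_Rsqr_abs, Rabs_mult, (Rabs_right 2) by lra. ring.
Qed.

Lemma dist_ell a b u v h m : v - u = 2 * h -> u + v = 2 * m ->
  dist2 (ell a b u) (ell a b v) = 2 * Rabs (sin h) * Nf a b m.
Proof.
  intros H1 H2. replace u with (m - h) by lra. replace v with (m + h) by lra.
  apply dist_ell_mh.
Qed.

Lemma NN a b x y :
  Nf a b x * Nf a b y =
  sqrt (((a^2+b^2)/2 * cos (x+y) - (a^2-b^2)/2 * cos (x-y))^2 + (a*b)^2 * sin (x+y) ^2).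
Proof.
  unfold Nf. rewrite <- sqrt_mult by nra. f_equal.
  rewrite cos_plus, cos_minus, sin_plus.
  pose proof (sin2_cos2 x) as E1. pose proof (sin2_cos2 y) as E2.
  unfold Rsqr in *. first [ring | field | nsatz].
Qed.

Lemma I1 al be ga : sin al * sin ga + sin be * sin (al+be+ga) = sin (al+be) * sin (be+ga).
Proof.
  repeat rewrite ?sin_plus, ?cos_plus.
  pose proof (sin2_cos2 al). pose proof (sin2_cos2 be). pose proof (sin2_cos2 ga).
  unfold Rsqr in *. first [ring | field | nsatz].
Qed.

Lemma I2 al be ga : sin al * sin ga * cos (-(al+2*be+ga)) + sin be * sin (al+be+ga) * cos (ga - al)
  = sin (al+be) * sin (be+ga) * cos (-(al+ga)).
Proof.
  rewrite !cos_neg. replace (al+2*be+ga) with (al+be+be+ga) by ring.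
  rewrite cos_minus; repeat rewrite ?sin_plus, ?cos_plus.
  pose proof (sin2_cos2 al). pose proof (sin2_cos2 be). pose proof (sin2_cos2 ga).
  unfold Rsqr in *. first [ring | field | nsatz].
Qed.
Open Scope R_scope.

Lemma up s f k C S c : C^2 + S^2 = 1 -> -1 <= c <= 1 -> 0 <= f -> s^2 = f^2 + k^2 -> 0 <= s ->
  sqrt ((s*C - f*c)^2 + k^2 * S^2) <= s - f*c*C.
Proof.
  intros HC Hc Hf Hs Hs0.
  assert (f <= s) by nra.
  assert (-1 <= C <= 1) by nra.
  assert (-1 <= c*C <= 1) by nra.
  assert (0 <= s - f*c*C) by nra.
  rewrite <- (sqrt_pow2 (s - f*c*C)) by lra.
  apply sqrt_le_1_alt.
  assert (E: (s - f*c*C)^2 - ((s*C - f*c)^2 + k^2 * S^2) = f^2 * (1 - c^2) * (1 - C^2)).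
  { replace (S^2) with (1 - C^2) by lra. replace (k^2) with (s^2 - f^2) by lra. ring. }
  assert (0 <= f^2 * (1 - c^2) * (1 - C^2)) by (apply Rmult_le_pos; [apply Rmult_le_pos|]; nra).
  lra.
Qed.

Lemma low s f k C S c : C^2 + S^2 = 1 -> -1 <= c <= 1 -> 0 <= f -> s^2 = f^2 + k^2 -> 0 <= s -> 0 <= k ->
  k * (s - f*c*C) <= s * sqrt ((s*C - f*c)^2 + k^2 * S^2).
Proof.
  intros HC Hc Hf Hs Hs0 Hk.
  assert (f <= s) by nra.
  assert (-1 <= C <= 1) by nra.
  assert (-1 <= c*C <= 1) by nra.
  assert (0 <= s - f*c*C) by nra.
  rewrite <- (sqrt_pow2 (k * (s - f*c*C))) by nra.
  assert (HQ: 0 <= (s*C - f*c)^2 + k^2 * S^2) by (apply Rplus_le_le_0_compat; [apply pow2_ge_0| apply Rmult_le_pos; apply pow2_ge_0]).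
  replace (s * sqrt ((s*C - f*c)^2 + k^2 * S^2)) with (sqrt (s^2 * ((s*C - f*c)^2 + k^2 * S^2))).
  2:{ rewrite sqrt_mult by nra. rewrite sqrt_pow2 by lra. reflexivity. }
  apply sqrt_le_1_alt.
  assert (E: s^2 * ((s*C - f*c)^2 + k^2 * S^2) - (k * (s - f*c*C))^2
    = (s^2 - k^2) * (s*C - f*c)^2 + k^2 * (f*c)^2 * (1 - C^2)).
  { replace (S^2) with (1 - C^2) by lra. ring. }
  assert (0 <= (s^2 - k^2) * (s*C - f*c)^2) by (apply Rmult_le_pos; [nra | apply pow2_ge_0]).
  assert (0 <= k^2 * (f*c)^2 * (1 - C^2)) by (apply Rmult_le_pos; [apply Rmult_le_pos; apply pow2_ge_0 | nra]).
  lra.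
Qed.

Lemma NN' a b x y tau th : x + y = tau -> x - y = th ->
  Nf a b x * Nf a b y =
  sqrt (((a^2+b^2)/2 * cos tau - (a^2-b^2)/2 * cos th)^2 + (a*b)^2 * sin tau ^2).
Proof. intros <- <-. apply NN. Qed.

Lemma div_le_helper n d s k : 0 < d -> 0 < k -> n * k <= s * d -> n / d <= s / k.
Proof.
  intros Hd Hk H.
  replace (n/d) with ((n*k) * /(d*k)) by (field; lra).
  replace (s/k) with ((s*d) * /(d*k)) by (field; lra).
  apply Rmult_le_compat_r; [left; apply Rinv_0_lt_compat; nra | assumption].
Qed.

Lemma key a b t1 al be ga : 0 < b -> b <= a -> 0 < al -> 0 < be -> 0 < ga -> al + be + ga < PI ->
  pfun (ell a b t1) (ell a b (t1+2*al)) (ell a b (t1+2*al+2*be)) (ell a b (t1+2*al+2*be+2*ga))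
  <= (a^2+b^2)/2 / (a*b).
Proof.
  intros Hb Hba Ha Hbe Hg Hs.
  assert (S1: 0 < sin al) by (apply sin_gt_0; lra).
  assert (S2: 0 < sin be) by (apply sin_gt_0; lra).
  assert (S3: 0 < sin ga) by (apply sin_gt_0; lra).
  assert (S4: 0 < sin (al+be)) by (apply sin_gt_0; lra).
  assert (S5: 0 < sin (be+ga)) by (apply sin_gt_0; lra).
  assert (S6: 0 < sin (al+be+ga)) by (apply sin_gt_0; lra).
  unfold pfun.
  rewrite (dist_ell a b t1 (t1+2*al) al (t1+al)) by lra.
  rewrite (dist_ell a b (t1+2*al+2*be) (t1+2*al+2*be+2*ga) ga (t1+2*al+2*be+ga)) by lra.
  rewrite (dist_ell a b t1 (t1+2*al+2*be+2*ga) (al+be+ga) (t1+al+be+ga)) by lra.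
  rewrite (dist_ell a b (t1+2*al) (t1+2*al+2*be) be (t1+2*al+be)) by lra.
  rewrite (dist_ell a b t1 (t1+2*al+2*be) (al+be) (t1+al+be)) by lra.
  rewrite (dist_ell a b (t1+2*al) (t1+2*al+2*be+2*ga) (be+ga) (t1+2*al+be+ga)) by lra.
  rewrite !Rabs_right by lra.
  set (tau := 2*t1 + 3*al + 2*be + ga).
  set (s := (a^2+b^2)/2). set (f := (a^2-b^2)/2). set (k := a*b).
  set (Q := fun th => sqrt ((s * cos tau - f * cos th)^2 + k^2 * sin tau ^2)).
  assert (E12: 2 * sin al * Nf a b (t1+al) * (2 * sin ga * Nf a b (t1+2*al+2*be+ga))
     = 4 * (sin al * sin ga) * Q (-(al+2*be+ga))).
  { transitivity (4 * (sin al * sin ga) * (Nf a b (t1+al) * Nf a b (t1+2*al+2*be+ga))); [ring|].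
    rewrite (NN' a b _ _ tau (-(al+2*be+ga))) by (unfold tau; lra). reflexivity. }
  assert (E14: 2 * sin (al+be+ga) * Nf a b (t1+al+be+ga) * (2 * sin be * Nf a b (t1+2*al+be))
     = 4 * (sin be * sin (al+be+ga)) * Q (ga - al)).
  { transitivity (4 * (sin be * sin (al+be+ga)) * (Nf a b (t1+al+be+ga) * Nf a b (t1+2*al+be))); [ring|].
    rewrite (NN' a b _ _ tau (ga - al)) by (unfold tau; lra). reflexivity. }
  assert (E13: 2 * sin (al+be) * Nf a b (t1+al+be) * (2 * sin (be+ga) * Nf a b (t1+2*al+be+ga))
     = 4 * (sin (al+be) * sin (be+ga)) * Q (-(al+ga))).
  { transitivity (4 * (sin (al+be) * sin (be+ga)) * (Nf a b (t1+al+be) * Nf a b (t1+2*al+be+ga))); [ring|].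
    rewrite (NN' a b _ _ tau (-(al+ga))) by (unfold tau; lra). reflexivity. }
  rewrite E12, E14, E13.
  pose proof (I1 al be ga) as H1. pose proof (I2 al be ga) as H2.
  set (lam := sin al * sin ga) in *. set (mu := sin be * sin (al+be+ga)) in *.
  set (nu := sin (al+be) * sin (be+ga)) in *.
  assert (Hlam: 0 < lam) by (unfold lam; nra).
  assert (Hmu: 0 < mu) by (unfold mu; nra).
  assert (Hnu: 0 < nu) by lra.
  assert (HC: cos tau ^2 + sin tau ^2 = 1) by (pose proof (sin2_cos2 tau); unfold Rsqr in *; lra).
  assert (Hf: 0 <= f) by (unfold f; nra).
  assert (Hk: 0 < k) by (unfold k; nra).
  assert (Hsf: s^2 = f^2 + k^2) by (unfold s, f, k; field).
  assert (Hs0: 0 <= s) by (unfold s; nra).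
  assert (Hsf2: f < s) by (unfold s, f; nra).
  pose proof (COS_bound (-(al+2*be+ga))) as c1.
  pose proof (COS_bound (ga-al)) as c2.
  pose proof (COS_bound (-(al+ga))) as c3.
  pose proof (COS_bound tau) as cT.
  pose proof (up s f k (cos tau) (sin tau) (cos (-(al+2*be+ga))) HC c1 Hf Hsf Hs0) as U1.
  pose proof (up s f k (cos tau) (sin tau) (cos (ga-al)) HC c2 Hf Hsf Hs0) as U2.
  pose proof (low s f k (cos tau) (sin tau) (cos (-(al+ga))) HC c3 Hf Hsf Hs0 (Rlt_le _ _ Hk)) as L3.
  fold (Q (-(al+2*be+ga))) in U1. fold (Q (ga-al)) in U2. fold (Q (-(al+ga))) in L3.
  assert (Hpos: 0 < s - f * cos (-(al+ga)) * cos tau).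
  { assert (-1 <= cos (-(al+ga)) * cos tau <= 1) by nra. nra. }
  assert (HQ3: 0 < Q (-(al+ga))) by nra.
  apply div_le_helper; [nra | exact Hk |].
  assert (A1: lam * Q (-(al+2*be+ga)) <= lam * (s - f * cos (-(al+2*be+ga)) * cos tau))
    by (apply Rmult_le_compat_l; lra).
  assert (A2: mu * Q (ga-al) <= mu * (s - f * cos (ga-al) * cos tau))
    by (apply Rmult_le_compat_l; lra).
  assert (A3: lam * (s - f * cos (-(al+2*be+ga)) * cos tau) + mu * (s - f * cos (ga-al) * cos tau)
     = nu * (s - f * cos (-(al+ga)) * cos tau)).
  { transitivity ((lam+mu)*s - f * cos tau * (lam * cos (-(al+2*be+ga)) + mu * cos (ga-al))); [ring|].
    rewrite H2, H1. ring. }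
  assert (A4: k * (lam * Q (-(al+2*be+ga)) + mu * Q (ga-al)) <= k * (nu * (s - f * cos (-(al+ga)) * cos tau)))
    by (apply Rmult_le_compat_l; lra).
  assert (A5: nu * (k * (s - f * cos (-(al+ga)) * cos tau)) <= nu * (s * Q (-(al+ga))))
    by (apply Rmult_le_compat_l; lra).
  nra.
Qed.
Lemma pi_lo : 288/100 < PI.
Proof.
  destruct (PI_ineq 1) as [H _]. unfold tg_alt, PI_tg in H. simpl in H. lra.
Qed.
Lemma pi_hi : PI < 334/100.
Proof.
  destruct (PI_ineq 2) as [_ H]. unfold tg_alt, PI_tg in H. simpl in H. lra.
Qed.
Lemma cb y : 0 <= y <= PI/2 -> cos y <= 1 - y^2/2 + y^4/24.
Proof. intros. destruct (cos_bound y 0) as [_ H0]; try lra. unfold cos_approx, cos_term in H0. simpl in H0. lra. Qed.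
Lemma sb y : 0 <= y <= PI -> y - y^3/6 <= sin y.
Proof. intros. destruct (sin_bound y 0) as [H0 _]; try lra. unfold sin_approx, sin_term in H0. simpl in H0. lra. Qed.

Lemma polyb e : 0 <= e <= 6/10 ->
  (1 - (144/100*e)^2/2 + (144/100*e)^4/24) * (1 + (1-e)^2) <= 2*(1-e).
Proof.
  intros [H0 H1].
  set (c := 144/100).
  assert (B: 0 <= -1 + c^2*(1 - e + e^2/2) - (c^4*e^2/24)*(2-2*e+e^2)).
  { assert (0 <= e^2 <= 36/100) by nra.
    assert (2-2*e+e^2 <= 2) by nra.
    assert (0 <= 2-2*e+e^2) by nra.
    assert (e^2*(2-2*e+e^2) <= 72/100) by nra.
    unfold c. nra. }
  assert (E: 2*(1-e) - (1 - (c*e)^2/2 + (c*e)^4/24) * (1 + (1-e)^2) =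
     e^2 * (-1 + c^2*(1 - e + e^2/2) - (c^4*e^2/24)*(2-2*e+e^2))) by (unfold c; field).
  assert (0 <= e^2 * (-1 + c^2*(1 - e + e^2/2) - (c^4*e^2/24)*(2-2*e+e^2))) by (apply Rmult_le_pos; [nra|lra]).
  lra.
Qed.

Lemma gdec z y : 0 <= z <= y -> y <= 2 -> 1 - y^2/2 + y^4/24 <= 1 - z^2/2 + z^4/24.
Proof.
  intros [Hz Hzy] Hy.
  assert (E: (1 - z^2/2 + z^4/24) - (1 - y^2/2 + y^4/24) = (y^2 - z^2) * (1/2 - (y^2+z^2)/24)) by field.
  assert (0 <= y^2 - z^2) by nra.
  assert (0 <= 1/2 - (y^2+z^2)/24) by nra.
  assert (0 <= (y^2 - z^2) * (1/2 - (y^2+z^2)/24)) by (apply Rmult_le_pos; lra).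
  lra.
Qed.

Lemma R1 x : 0 < x <= 1 -> sin (PI/2*x) * (1+x^2) <= 2*x.
Proof.
  intros Hx. pose proof pi_lo. pose proof pi_hi.
  destruct (Rle_lt_dec x (2/5)) as [Hs|Hl].
  - assert (sin (PI/2*x) < PI/2*x) by (apply sin_lt_x; nra).
    assert (sin (PI/2*x) * (1+x^2) <= PI/2*x*(1+x^2)) by (apply Rmult_le_compat_r; nra).
    assert (PI * (1 + x^2) <= 4) by nra.
    nra.
  - set (e := 1 - x).
    assert (He: 0 <= e <= 6/10) by (unfold e; lra).
    assert (Hsc: sin (PI/2*x) = cos (PI/2*e)).
    { rewrite <- cos_shift. f_equal. unfold e. ring. }
    rewrite Hsc.
    assert (Hc: cos (PI/2*e) <= 1 - (PI/2*e)^2/2 + (PI/2*e)^4/24) by (apply cb; nra).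
    assert (Hg: 1 - (PI/2*e)^2/2 + (PI/2*e)^4/24 <= 1 - (144/100*e)^2/2 + (144/100*e)^4/24)
      by (apply gdec; nra).
    pose proof (polyb e He) as Hp.
    replace x with (1 - e) by (unfold e; ring).
    assert (cos (PI/2*e) * (1 + (1-e)^2) <= (1 - (144/100*e)^2/2 + (144/100*e)^4/24) * (1 + (1-e)^2))
      by (apply Rmult_le_compat_r; nra).
    lra.
Qed.

Lemma R2 x : 0 < x <= 1 -> PI * x <= 2 * (1+x^2) * sin (PI/2*x).
Proof.
  intros Hx. pose proof pi_lo. pose proof pi_hi.
  set (u := PI/2*x).
  assert (Hu: 0 < u <= PI/2) by (unfold u; nra).
  assert (Hs: u - u^3/6 <= sin u) by (apply sb; lra).
  assert (Hk: 1 <= (1+x^2) * (1 - PI^2 * x^2 / 24)).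
  { assert (E: (1+x^2) * (1 - PI^2 * x^2 / 24) - 1 = x^2 * (1 - PI^2/24 - PI^2*x^2/24)) by field.
    assert (PI^2 <= 12) by nra.
    assert (x^2 <= 1) by nra.
    assert (0 <= 1 - PI^2/24 - PI^2*x^2/24) by nra.
    assert (0 <= x^2 * (1 - PI^2/24 - PI^2*x^2/24)) by (apply Rmult_le_pos; nra).
    lra. }
  assert (E2: u - u^3/6 = u * (1 - PI^2 * x^2 / 24)) by (unfold u; field).
  assert (u <= (1+x^2) * (u - u^3/6)).
  { rewrite E2. assert (u * 1 <= u * ((1+x^2) * (1 - PI^2 * x^2 / 24))) by (apply Rmult_le_compat_l; lra). nra. }
  assert ((1+x^2) * (u - u^3/6) <= (1+x^2) * sin u) by (apply Rmult_le_compat_l; nra).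
  unfold u in *. nra.
Qed.

Lemma div_le_helper' n d s k : 0 < d -> 0 < k -> n * k <= s * d -> n / d <= s / k.
Proof. apply div_le_helper. Qed.

Lemma upper_all a b v : 0 < b -> b <= a -> P_values a b v -> v <= (a^2+b^2)/2/(a*b).
Proof.
  intros Hb Hba H. destruct H as (a1 & a2 & a3 & a4 & Hq & Hv).
  destruct Hq as (t1 & t2 & t3 & t4 & H12 & H23 & H34 & H41 & E1 & E2 & E3 & E4).
  subst.
  replace t2 with (t1 + 2*((t2-t1)/2)) by field.
  replace t3 with (t1 + 2*((t2-t1)/2) + 2*((t3-t2)/2)) by field.
  replace t4 with (t1 + 2*((t2-t1)/2) + 2*((t3-t2)/2) + 2*((t4-t3)/2)) by field.
  apply key; lra.
Qed.

Lemma rhombus a b : 0 < b -> b <= a ->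
  P_values a b ((a^2+b^2)/2/(a*b)).
Proof.
  intros Hb Hba.
  exists (ell a b 0), (ell a b (PI/2)), (ell a b PI), (ell a b (3*(PI/2))).
  split.
  - exists 0, (PI/2), PI, (3*(PI/2)). pose proof PI_RGT_0.
    repeat split; try reflexivity; lra.
  - unfold pfun, dist2, ell; simpl fst; simpl snd.
    rewrite cos_0, sin_0, cos_PI2, sin_PI2, cos_PI, sin_PI, cos_3PI2, sin_3PI2.
    replace ((a * 1 - a * 0) ^ 2 + (b * 0 - b * 1) ^ 2) with (a^2+b^2) by ring.
    replace ((a * -1 - a * 0) ^ 2 + (b * 0 - b * -1) ^ 2) with (a^2+b^2) by ring.
    replace ((a * 1 - a * 0) ^ 2 + (b * 0 - b * -1) ^ 2) with (a^2+b^2) by ring.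
    replace ((a * 0 - a * -1) ^ 2 + (b * 1 - b * 0) ^ 2) with (a^2+b^2) by ring.
    replace ((a * 1 - a * -1) ^ 2 + (b * 0 - b * 0) ^ 2) with ((2*a)^2) by ring.
    replace ((a * 0 - a * 0) ^ 2 + (b * 1 - b * -1) ^ 2) with ((2*b)^2) by ring.
    rewrite !sqrt_pow2 by lra.
    rewrite !sqrt_sqrt by nra.
    field. lra.
Qed.

Theorem theorem1p6 (a b : R) (hb : 0 < b) (hba : b <= a) :
  exists P : R,
    is_lub (P_values a b) P /\
    (1 / 2) * (a / b + b / a) <= P /\
    P <= 1 / sin (b * PI / (2 * a)) /\
    1 / sin (b * PI / (2 * a)) <= (2 / PI) * (a / b + b / a).
Proof.
  exists ((a^2+b^2)/2/(a*b)).
  assert (Ha: 0 < a) by lra.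
  assert (EP: (a^2+b^2)/2/(a*b) = (1 + (b/a)^2) / (2*(b/a))) by (field; lra).
  assert (EA: b * PI / (2 * a) = PI/2 * (b/a)) by (field; lra).
  assert (Hx: 0 < b/a <= 1).
  { split. apply Rdiv_lt_0_compat; lra. apply (Rmult_le_reg_r a); [lra|]. field_simplify; lra. }
  set (x := b/a) in *.
  assert (Hsin: 0 < sin (PI/2*x)) by (apply sin_gt_0; pose proof PI_RGT_0; nra).
  pose proof PI_RGT_0.
  split; [|split; [|split]].
  - split.
    + intros v Hv. apply upper_all with (a:=a) (b:=b); auto.
    + intros M HM. apply HM. apply rhombus; auto.
  - right. unfold x. field. lra.
  - rewrite EP, EA. apply div_le_helper; [lra|lra|]. pose proof (R1 x Hx). lra.
  - rewrite EA. replace (2 / PI * (a / b + x)) with (2*(1+x^2)/(PI*x)).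
    2:{ unfold x. field. split; lra. }
    apply div_le_helper; [lra|nra|]. pose proof (R2 x Hx). lra.
Qed.
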